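(* Let $p\ge q\ge1$. Let $Q_1:\mathbb{R}^{d_0}\to\mathbb{R}^{d_1}$ and $Q_2:\mathbb{R}^{d_0}\to\mathbb{R}^{d_2}$ be measurable. Fix a measurable partition $U_1,\dots,U_l$ of $[0,1]^{d_0}$ and a measurable set $B\subset\mathbb{R}^{d_0+d_1}$. For measurable $U\subset\mathbb{R}^{d_0}$ define $E^{(1)}_Ug(x_0,x_1)=\int_U g(u)e(x_0\cdot u+x_1\cdot Q_1(u))\,du$ and $E^{(2)}_Uh(x_0,x_1,x_2)=\int_U h(u)e(x_0\cdot u+x_1\cdot Q_1(u)+x_2\cdot Q_2(u))\,du$, where $x_i\in\mathbb{R}^{d_i}$ and $e(z)=e^{2\pi iz}$. Suppose $C$ is a number such that $\|E^{(1)}_{[0,1]^{d_0}}g\|_{L^p(B)}\le C\big(\sum_i\|E^{(1)}_{U_i}g\|_{L^p(B)}^q\big)^{1/q}$ for all measurable $g$. Then for every measurable $B'\subset\mathbb{R}^{d_2}$ and every measurable $h$, $\|E^{(2)}_{[0,1]^{d_0}}h\|_{L^p(B\times B')}\le C\big(\sum_i\|E^{(2)}_{U_i}h\|_{L^p(B\times B')}^q\big)^{1/q}$. *)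

(* Defs.v *)
From HB Require Import structures.
From mathcomp Require Import all_boot all_order all_algebra.
From mathcomp Require Import all_classical all_reals all_analysis.
From mathcomp Require Import complex.

Set Implicit Arguments.
Unset Strict Implicit.
Unset Printing Implicit Defensive.

Import Order.TTheory GRing.Theory Num.Theory.
Import numFieldNormedType.Exports.

Local Open Scope classical_set_scope.
Local Open Scope ring_scope.

Section prod_sf.
Local Open Scope ereal_scope.
Context d1 d2 (T1 : measurableType d1) (T2 : measurableType d2) (R : realType).
Variable m1 : {sigma_finite_measure set T1 -> \bar R}.
Variable m2 : {sigma_finite_measure set T2 -> \bar R}.
Definition pmeas := (m1 \x m2)%E.
HB.instance Definition _ := Measure.copy pmeas (m1 \x m2)%E.

Lemma pm_sigma_finite : sigma_finite setT pmeas.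
Proof.
have /sigma_finiteP[F [TF ndF Foo]] := sigma_finiteT m1.
have /sigma_finiteP[G [TG ndG Goo]] := sigma_finiteT m2.
exists (fun n => F n `*` G n).
 rewrite -setXTT TF TG predeqE => -[x y]; split.
    move=> [/= [n _ Fnx] [k _ Gky]]; exists (maxn n k) => //; split.
    - by move: x Fnx; exact/subsetPset/ndF/leq_maxl.
    - by move: y Gky; exact/subsetPset/ndG/leq_maxr.
  by move=> [n _ []/= ? ?]; split; exists n.
move=> k; have [? ?] := Foo k; have [? ?] := Goo k.
split; first exact: measurableX.
by rewrite /pmeas product_measure1E// lte_mul_pinfty// ge0_fin_numE.
Qed.

HB.instance Definition _ := Measure_isSigmaFinite.Build _ _ _ pmeas
  pm_sigma_finite.
End prod_sf.
Arguments pmeas {d1 d2 T1 T2 R} m1 m2.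

(* Euclidean space R^n with its Borel sigma-algebra (iterated product),
   its Lebesgue measure (iterated product of 1-dimensional Lebesgue measures),
   its dot product, and the unit cube [0,1]^n. *)
Record space (R : realType) := Space {
  sp_disp : measure_display;
  sp_type : measurableType sp_disp;
  sp_leb  : {sigma_finite_measure set sp_type -> \bar R};
  sp_dot  : sp_type -> sp_type -> R;
  sp_cube : set sp_type }.

Fixpoint Rspace (R : realType) (n : nat) : space R :=
  match n with
  | 0 => @Space R _ unit (\d_ tt) (fun _ _ => 0) setT
  | n'.+1 =>
      let S := Rspace R n' in
      @Space R _ _
        (pmeas (@lebesgue_measure R) (@sp_leb R S))
        (fun x y => x.1 * y.1 + @sp_dot R S x.2 y.2)
        (`[0%R, 1%R]%classic `*` @sp_cube R S)
  end.

Definition Rn (R : realType) (n : nat) := @sp_type R (Rspace R n).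
Definition lebn (R : realType) (n : nat) := @sp_leb R (Rspace R n).
Definition dotn (R : realType) (n : nat) : Rn R n -> Rn R n -> R :=
  @sp_dot R (Rspace R n).
Definition cube (R : realType) (n : nat) : set (Rn R n) := @sp_cube R (Rspace R n).

Arguments Rn : clear implicits.
Arguments lebn : clear implicits.
Arguments cube : clear implicits.

Local Open Scope complex_scope.

Definition ee (R : realType) (z : R) : R[i] :=
  (cos (2 * pi * z)) +i* (sin (2 * pi * z)).

Definition cmod (R : realType) (z : R[i]) : R :=
  Num.sqrt (complex.Re z ^+ 2 + complex.Im z ^+ 2).

Definition cintegral (R : realType) (n : nat) (U : set (Rn R n))
    (f : Rn R n -> R[i]) : R[i] :=
  (Rintegral (lebn R n) U (fun u => complex.Re (f u)))
  +i* (Rintegral (lebn R n) U (fun u => complex.Im (f u))).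

Definition cmeasurable (R : realType) (n : nat) (f : Rn R n -> R[i]) :=
  measurable_fun setT (fun u => complex.Re (f u)) /\
  measurable_fun setT (fun u => complex.Im (f u)).

Definition cintegrable (R : realType) (n : nat) (D : set (Rn R n))
    (f : Rn R n -> R[i]) :=
  (lebn R n).-integrable D (fun u => (complex.Re (f u))%:E) /\
  (lebn R n).-integrable D (fun u => (complex.Im (f u))%:E).

Definition E1 (R : realType) (d0 d1 : nat) (Q1 : Rn R d0 -> Rn R d1)
    (U : set (Rn R d0)) (g : Rn R d0 -> R[i]) (x : Rn R d0 * Rn R d1) : R[i] :=
  cintegral U (fun u => g u * ee (dotn x.1 u + dotn x.2 (Q1 u))).

Definition E2 (R : realType) (d0 d1 d2 : nat) (Q1 : Rn R d0 -> Rn R d1)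
    (Q2 : Rn R d0 -> Rn R d2) (U : set (Rn R d0)) (h : Rn R d0 -> R[i])
    (x : (Rn R d0 * Rn R d1) * Rn R d2) : R[i] :=
  cintegral U (fun u =>
    h u * ee (dotn x.1.1 u + dotn x.1.2 (Q1 u) + dotn x.2 (Q2 u))).

Local Close Scope complex_scope.

Definition LpnormC (R : realType) (dd : measure_display) (T : measurableType dd)
    (mu : {measure set T -> \bar R}) (p : R) (B : set T) (F : T -> R[i])
    : \bar R :=
  Lnorm mu p%:E (fun x => (\1_B x * cmod (F x))%:E).

(* Main.v *)
Require Import Defs.
From HB Require Import structures.
From mathcomp Require Import all_boot all_order all_algebra.
From mathcomp Require Import all_classical all_reals all_analysis.
From mathcomp Require Import complex.
From mathcomp Require Import measurable_realfun.
From mathcomp Require Import ring lra.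
Set Implicit Arguments.
Unset Strict Implicit.
Unset Printing Implicit Defensive.
Import Order.TTheory GRing.Theory Num.Theory.
Import numFieldNormedType.Exports.
Local Open Scope classical_set_scope.
Local Open Scope ring_scope.
Lemma mdot (R : realType) n d (X : measurableType d) (f g : X -> Rn R n) :
  measurable_fun setT f -> measurable_fun setT g ->
  measurable_fun setT (fun x => dotn (f x) (g x)).
Proof.
elim: n d X f g => [|n IH] d X f g mf mg.
  exact: measurable_cst.
rewrite /dotn /=.
apply: measurable_funD.
  apply: measurable_funM.
    exact: (measurableT_comp measurable_fst mf).
  exact: (measurableT_comp measurable_fst mg).
apply: (IH _ _ (fun x => (f x).2) (fun x => (g x).2)).
  exact: (measurableT_comp measurable_snd mf).
exact: (measurableT_comp measurable_snd mg).
Qed.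

Lemma mparam (R : realType) d (X : measurableType d) d' (Y : measurableType d')
  (m : {sigma_finite_measure set Y -> \bar R}) (V : set Y) (k : X * Y -> R) :
  measurable V -> measurable_fun setT k ->
  measurable_fun setT (fun x => Rintegral m V (fun y => k (x, y))).
Proof.
move=> mV mk.
pose K z := (\1_V z.2 * k z)%R.
have mK : measurable_fun setT K.
  apply: measurable_funM => //.
  rewrite (_ : (fun z => _) = \1_V \o snd) //.
  exact: (measurableT_comp (measurable_indic mV) measurable_snd).
have mKE : measurable_fun setT (EFin \o K) by apply/measurable_EFinP.
rewrite /Rintegral.
apply: (measurableT_comp (fine_measurable measurableT)).
have E x : (fun y => (k (x, y))%:E) \_ V = (fun y => (K (x, y))%:E).
  apply/funext => y; rewrite /patch /K indicE /=.
  by case: ifP => _; rewrite ?mul1r ?mul0r.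
under eq_fun do rewrite integral_mkcond E integralE.
apply: emeasurable_funB.
- have := measurable_fun_fubini_tonelli_F (m2 := m) (funepos (EFin \o K))
    (measurable_funepos mKE) (fun z => funepos_ge0 _ z).
  apply: eq_measurable_fun => x _.
  by rewrite /fubini_F; apply: eq_integral => y _; rewrite !funeposE.
- have := measurable_fun_fubini_tonelli_F (m2 := m) (funeneg (EFin \o K))
    (measurable_funeneg mKE) (fun z => funeneg_ge0 _ z).
  apply: eq_measurable_fun => x _.
  by rewrite /fubini_F; apply: eq_integral => y _; rewrite !funenegE.
Qed.

Section cx.
Variable R : realType.
Local Open Scope complex_scope.
Lemma Re_mul (x y : R[i]) : complex.Re (x * y) = (complex.Re x * complex.Re y - complex.Im x * complex.Im y)%R.
Proof. by case: x => a b; case: y => c e. Qed.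
Lemma Im_mul (x y : R[i]) : complex.Im (x * y) = (complex.Re x * complex.Im y + complex.Im x * complex.Re y)%R.
Proof. by case: x => a b; case: y => c e. Qed.
Lemma ee_add (a b : R) : ee (a + b) = ee a * ee b.
Proof.
rewrite /ee mulrDr cosD sinD.
by apply/eqP; rewrite eq_complex /= eqxx /= addrC eqxx.
Qed.
End cx.

Lemma mee (R : realType) d (Y : measurableType d) (a : Y -> R[i]) (ps : Y -> R) :
  measurable_fun setT (fun y => complex.Re (a y)) ->
  measurable_fun setT (fun y => complex.Im (a y)) ->
  measurable_fun setT ps ->
  measurable_fun setT (fun y => complex.Re (a y * ee (ps y))) /\
  measurable_fun setT (fun y => complex.Im (a y * ee (ps y))).
Proof.
move=> mRe mIm mps.
have mc : measurable_fun setT (fun y => cos (2 * pi * ps y)).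
  apply: (measurableT_comp (continuous_measurable_fun (@continuous_cos R))).
  by apply: measurable_funM => //; exact: measurable_cst.
have ms : measurable_fun setT (fun y => sin (2 * pi * ps y)).
  apply: (measurableT_comp (continuous_measurable_fun (@continuous_sin R))).
  by apply: measurable_funM => //; exact: measurable_cst.
split.
  under eq_fun do rewrite Re_mul /=.
  by apply: measurable_funB; apply: measurable_funM.
under eq_fun do rewrite Im_mul /=.
by apply: measurable_funD; apply: measurable_funM.
Qed.

Lemma mE2 (R : realType) (d0 d1 d2 : nat) (Q1 : Rn R d0 -> Rn R d1)
  (Q2 : Rn R d0 -> Rn R d2) (V : set (Rn R d0)) (h : Rn R d0 -> R[i]) :
  measurable_fun setT Q1 -> measurable_fun setT Q2 ->
  measurable V -> cmeasurable h ->
  measurable_fun setT (fun x => cmod (E2 Q1 Q2 V h x)).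
Proof.
move=> mQ1 mQ2 mV [mhr mhi].
pose ps (xu : ((Rn R d0 * Rn R d1) * Rn R d2) * Rn R d0) :=
  (dotn xu.1.1.1 xu.2 + dotn xu.1.1.2 (Q1 xu.2) + dotn xu.1.2 (Q2 xu.2))%R.
have mps : measurable_fun setT ps.
  apply: measurable_funD; first apply: measurable_funD.
  - apply: mdot; last exact: measurable_snd.
    exact: (measurableT_comp measurable_fst (measurableT_comp measurable_fst measurable_fst)).
  - apply: mdot; last exact: (measurableT_comp mQ1 measurable_snd).
    exact: (measurableT_comp measurable_snd (measurableT_comp measurable_fst measurable_fst)).
  - apply: mdot; last exact: (measurableT_comp mQ2 measurable_snd).
    exact: (measurableT_comp measurable_snd measurable_fst).
have [mk1 mk2] := @mee R _ _ (fun xu => h xu.2) ps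
  (measurableT_comp mhr measurable_snd) (measurableT_comp mhi measurable_snd) mps.
rewrite /cmod /E2 /cintegral /=.
apply: (measurableT_comp (continuous_measurable_fun (@sqrt_continuous R))).
apply: measurable_funD; apply: measurable_funX.
  exact: (mparam _ mV mk1).
exact: (mparam _ mV mk2).
Qed.

Lemma cee (R : realType) n (D : set (Rn R n)) (a : Rn R n -> R[i]) (ps : Rn R n -> R) :
  measurable D -> cmeasurable a -> cintegrable D a -> measurable_fun setT ps ->
  cmeasurable (fun u => a u * ee (ps u)) /\ cintegrable D (fun u => a u * ee (ps u)).
Proof.
move=> mD [mar mai] [iar iai] mps.
have [m1 m2] := mee mar mai mps.
have iS : (lebn R n).-integrable D (fun u => (`|complex.Re (a u)| + `|complex.Im (a u)|)%:E).
  have := integrableD mD (integrable_abse iar) (integrable_abse iai).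
  by apply: eq_integrable => // u _ /=.
do 2 split => //.
- apply: (le_integrable mD _ _ iS).
    by apply/measurable_EFinP; exact: measurable_funS m1.
  move=> u _; rewrite /= Re_mul /= !lee_fin [X in _ <= X]ger0_norm ?addr_ge0 //.
  apply: le_trans (ler_normB _ _) _; rewrite !normrM.
  by apply: lerD; rewrite -[X in _ <= X]mulr1; apply: ler_wpM2l => //; [exact: cos_max|exact: sin_max].
- apply: (le_integrable mD _ _ iS).
    by apply/measurable_EFinP; exact: measurable_funS m2.
  move=> u _; rewrite /= Im_mul /= !lee_fin [X in _ <= X]ger0_norm ?addr_ge0 //.
  apply: le_trans (ler_normD _ _) _; rewrite !normrM.
  by apply: lerD; rewrite -[X in _ <= X]mulr1; apply: ler_wpM2l => //; [exact: sin_max|exact: cos_max].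
Qed.

Lemma mcube (R : realType) n : measurable (cube R n).
Proof.
elim: n => [|n IH] /=; first exact: measurableT.
rewrite /cube /=; apply: measurableX => //.
Qed.

Lemma indicX2 (T1 T2 : Type) (R : realType) (A : set T1) (A' : set T2) a b :
  \1_(A `*` A') (a, b) = (\1_A a * \1_A' b :> R)%R.
Proof.
rewrite !indicE; have [Aa|Aa] := boolP (a \in A); have [Ab|Ab] := boolP (b \in A');
  rewrite ?mulr1 ?mulr0 ?mul0r //.
- by rewrite mem_set //; split; exact: set_mem.
- by rewrite memNset // => -[_ /mem_set]; rewrite (negbTE Ab).
- by rewrite memNset // => -[/mem_set]; rewrite (negbTE Aa).
- by rewrite memNset // => -[/mem_set]; rewrite (negbTE Aa).
Qed.
Section AL.
Local Open Scope ereal_scope.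
Context d (T : measurableType d) (R : realType).
Variable mu : {measure set T -> \bar R}.

Lemma mpowR (f : T -> \bar R) r : measurable_fun setT f ->
  measurable_fun setT (fun x => f x `^ r).
Proof. by move=> mf; exact: (measurableT_comp (measurable_poweR r) mf). Qed.

Lemma emink2 (r : R) (f g : T -> \bar R) : (1 <= r)%R ->
  measurable_fun setT f -> measurable_fun setT g ->
  (forall x, 0 <= f x) -> (forall x, 0 <= g x) ->
  (\int[mu]_x ((f x + g x) `^ r)) `^ r^-1 <=
  (\int[mu]_x (f x `^ r)) `^ r^-1 + (\int[mu]_x (g x `^ r)) `^ r^-1.
Proof.
move=> r1 mf mg f0 g0.
have r0 : (0 < r)%R by apply: lt_le_trans r1.
have mpf : measurable_fun setT (fun x => f x `^ r).
  exact: mpowR.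
have mpg : measurable_fun setT (fun x => g x `^ r).
  exact: mpowR.
have [Fy|Ff] := eqVneq (\int[mu]_x (f x `^ r)) +oo.
  rewrite Fy poweRyr; last by rewrite invr_neq0 // gt_eqF.
  by rewrite addye ?leey// gt_eqF// (lt_le_trans _ (poweR_ge0 _ _)).
have [Gy|Gf] := eqVneq (\int[mu]_x (g x `^ r)) +oo.
  rewrite Gy poweRyr; last by rewrite invr_neq0 // gt_eqF.
  by rewrite addey ?leey// gt_eqF// (lt_le_trans _ (poweR_ge0 _ _)).
have aefin (h : T -> \bar R) : measurable_fun setT h -> (forall x, 0 <= h x) ->
    \int[mu]_x (h x `^ r) != +oo -> {ae mu, forall x, setT x -> h x = (fine (h x))%:E}.
  move=> mh h0 hf.
  have ih : mu.-integrable setT (fun x => h x `^ r).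
    apply/integrableP; split; first exact: mpowR.
    under eq_integral do rewrite gee0_abs ?poweR_ge0//.
    by rewrite ltey.
  apply: filterS (integrable_ae measurableT ih) => x /(_ I) hx _.
  rewrite fineK//; move: hx; case: (h x) (h0 x) => //= _.
  by rewrite gt_eqF.
have aef := aefin f mf f0 Ff; have aeg := aefin g mg g0 Gf.
set f' := fun x => fine (f x); set g' := fun x => fine (g x).
have mf' : measurable_fun setT f' by exact: (measurableT_comp (@fine_measurable R setT measurableT)).
have mg' : measurable_fun setT g' by exact: (measurableT_comp (@fine_measurable R setT measurableT)).
have f'0 x : (0 <= f' x)%R by rewrite /f' fine_ge0.
have g'0 x : (0 <= g' x)%R by rewrite /g' fine_ge0.
have E1 : \int[mu]_x ((f x + g x) `^ r) = \int[mu]_x ((f' x + g' x)%:E `^ r).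
  apply: ae_eq_integral => //.
  - by apply: mpowR; exact: emeasurable_funD.
  - apply: (@mpowR (EFin \o (f' \+ g')%R)); apply/measurable_EFinP; exact: measurable_funD.
  apply: filterS2 aef aeg => x hf hg _.
  by rewrite /= (hf I) (hg I).
have E2 (h : T -> \bar R) : measurable_fun setT h -> (forall x, 0 <= h x) ->
    \int[mu]_x (h x `^ r) != +oo ->
    \int[mu]_x (h x `^ r) = \int[mu]_x ((fine (h x))%:E `^ r).
  move=> mh h0 hf; apply: ae_eq_integral => //.
  - exact: mpowR.
  - apply: (@mpowR (EFin \o (fun x => fine (h x)))); apply/measurable_EFinP.
    exact: (measurableT_comp (@fine_measurable R setT measurableT)).
  apply: filterS (aefin h mh h0 hf) => x hx _.
  by rewrite -hx.
rewrite E1 (E2 f)// (E2 g)//.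
have := minkowski_EFin mu mf' mg' r1.
rewrite unlock /= => H; apply: (le_trans _ (le_trans H _)).
  by under [X in _ <= X `^ _]eq_integral do rewrite ger0_norm ?addr_ge0//.
under eq_integral do rewrite ger0_norm//.
by under [X in _ + X `^ _ <= _]eq_integral do rewrite ger0_norm//.
Qed.

Lemma eminkS (r : R) (I : Type) (s : seq I) (F : I -> T -> \bar R) : (1 <= r)%R ->
  (forall i, measurable_fun setT (F i)) -> (forall i x, 0 <= F i x) ->
  (\int[mu]_x ((\sum_(i <- s) F i x) `^ r)) `^ r^-1 <=
  \sum_(i <- s) (\int[mu]_x (F i x `^ r)) `^ r^-1.
Proof.
move=> r1 mF F0; have r0 : (0 < r)%R by apply: lt_le_trans r1.
elim: s => [|a s IH].
  rewrite big_nil; under eq_integral do rewrite big_nil poweR0r ?gt_eqF//.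
  by rewrite integral0 poweR0r ?invr_neq0 ?gt_eqF.
rewrite big_cons; under eq_integral do rewrite big_cons.
apply: le_trans (emink2 r1 _ _ _ _) _ => //.
- exact: emeasurable_sum.
- by move=> x; apply: sume_ge0 => i _.
- by apply: leeD.
Qed.

Lemma pow_le (x y : \bar R) (s : R) : (0 <= s)%R -> 0 <= x -> x <= y ->
  x `^ s <= y `^ s.
Proof.
move=> s0 x0 xy; apply: gt0_ler_poweR => //; rewrite in_itv /= ?leey ?x0//.
by rewrite (le_trans x0 xy).
Qed.

Lemma AL (p q C : R) l (I0 : T -> \bar R) (I : 'I_l -> T -> \bar R) :
  (1 <= q)%R -> (q <= p)%R -> measurable_fun setT I0 ->
  (forall i, measurable_fun setT (I i)) ->
  (forall x, 0 <= I0 x) -> (forall i x, 0 <= I i x) ->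
  (forall x, I0 x `^ p^-1 <= C%:E * (\sum_(i < l) (I i x `^ p^-1) `^ q) `^ q^-1) ->
  (\int[mu]_x I0 x) `^ p^-1 <=
    C%:E * (\sum_(i < l) ((\int[mu]_x I i x) `^ p^-1) `^ q) `^ q^-1.
Proof.
move=> q1 qp mI0 mI I00 I0' H.
have q0 : (0 < q)%R by apply: lt_le_trans q1.
have p0 : (0 < p)%R by apply: lt_le_trans qp.
have pi0 : (p^-1 != 0)%R by rewrite invr_neq0 // gt_eqF.
have qi0 : (q^-1 != 0)%R by rewrite invr_neq0 // gt_eqF.
have [Cneg|C0] := ltP C 0%R.
  have Z x : I0 x = 0 /\ forall i, I i x = 0.
    pose S := (\sum_(i < l) ((I i x `^ p^-1) `^ q)%E)%R.
    have S0 : 0 <= S by apply: sume_ge0 => i _; exact: poweR_ge0.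
    have SX : S `^ q^-1 = 0.
      apply/eqP; rewrite eq_le poweR_ge0 andbT leNgt; apply/negP => Sp.
      have := le_lt_trans (H x) (mule_lt0_gt0 _ Sp).
      by rewrite lte_fin Cneg ltNge poweR_ge0 => /(_ isT).
    have S00 : S = 0 by apply: poweR_eq0_eq0 SX.
    have Ii i : I i x = 0.
      apply: (poweR_eq0_eq0 (I0' i x)); apply: (poweR_eq0_eq0 (poweR_ge0 _ _)).
      apply/eqP; rewrite eq_le poweR_ge0 andbT -S00 /S (bigD1 i) //=.
      by apply: leeDl; apply: sume_ge0 => j _; exact: poweR_ge0.
    split=> //; apply: (poweR_eq0_eq0 (I00 x)); apply/eqP.
    rewrite eq_le poweR_ge0 andbT; apply: le_trans (H x) _.
    by rewrite -/S SX mule0.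
  under eq_integral do rewrite (Z _).1.
  under eq_bigr do under eq_integral do rewrite (Z _).2.
  rewrite integral0 poweR0r//.
  rewrite big1 => [|i _]; last by rewrite poweR0r // gt_eqF.
  by rewrite poweR0r // mule0.
have pn0 : (p != 0)%R by rewrite gt_eqF.
have qn0 : (q != 0)%R by rewrite gt_eqF.
have r1 : (1 <= p / q)%R by rewrite ler_pdivlMr // mul1r.
set r := (p / q)%R.
have r0 : (0 < r)%R by apply: lt_le_trans r1.
pose F i x := (I i x `^ p^-1) `^ q.
have mF i : measurable_fun setT (F i) by apply: mpowR; apply: mpowR.
have F0 i x : 0 <= F i x by exact: poweR_ge0.
have Fr i x : F i x `^ r = I i x.
  rewrite /F -!poweRrM (_ : (p^-1 * (q * r) = 1)%R) ?poweRe1 // /r.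
  by field; apply/andP.
pose S x := (\sum_(i < l) F i x)%R.
have S0 x : 0 <= S x by apply: sume_ge0.
have CE : 0 <= C%:E by rewrite lee_fin.
have step1 x : I0 x <= (C%:E `^ p) * (S x `^ r).
  have := pow_le (ltW p0) (poweR_ge0 _ _) (H x).
  rewrite -poweRrM mulVf // poweRe1 // => /le_trans; apply.
  by rewrite poweRM ?poweR_ge0 // -poweRrM mulrC.
have mS : measurable_fun setT S by apply: emeasurable_sum.
have step2 : \int[mu]_x I0 x <= C%:E `^ p * \int[mu]_x (S x `^ r).
  apply: (@le_trans _ _ (\int[mu]_x (C%:E `^ p * S x `^ r))).
    apply: ge0_le_integral => //.
    by apply: emeasurable_funM; [exact: measurable_cst|exact: mpowR].
  rewrite (@ge0_integralZl _ _ _ mu setT measurableT (fun x => S x `^ r)) //.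
  - exact: mpowR.
  - by move=> x _; exact: poweR_ge0.
  - exact: poweR_ge0.
pose Ts := (\sum_(i < l) (((\int[mu]_x I i x) `^ p^-1) `^ q)%E)%R.
have step3 : \int[mu]_x (S x `^ r) <= Ts `^ r.
  have := eminkS (index_enum 'I_l) r1 mF F0.
  under [X in _ <= X]eq_bigr do under eq_integral do rewrite Fr.
  move=> /(pow_le (ltW r0) (poweR_ge0 _ _)).
  rewrite -poweRrM mulVf ?gt_eqF // poweRe1; last by apply: integral_ge0 => x _; exact: poweR_ge0.
  move=> /le_trans; apply; apply: pow_le (ltW r0) _ _.
    by apply: sume_ge0 => i _; exact: poweR_ge0.
  rewrite le_eqVlt; apply/orP; left; apply/eqP; apply: eq_bigr => i _.
  rewrite -poweRrM; congr (_ `^ _); rewrite /r; field; exact/andP.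
have Ts0 : 0 <= Ts by apply: sume_ge0 => i _; exact: poweR_ge0.
have step4 : \int[mu]_x I0 x <= C%:E `^ p * Ts `^ r.
  by apply: le_trans step2 _; apply: lee_wpmul2l => //; exact: poweR_ge0.
have pi : (0 <= p^-1)%R by rewrite invr_ge0 ltW.
move: (pow_le pi (integral_ge0 _ (fun x _ => I00 x)) step4).
move=> /le_trans; apply.
rewrite poweRM ?poweR_ge0 // -!poweRrM mulfV // poweRe1 //.
rewrite le_eqVlt; apply/orP; left; apply/eqP; congr (_ * _ `^ _).
rewrite /r; field; exact/andP.
Qed.
End AL.

Unset Implicit Arguments.
Theorem lemma3p1 (R : realType) (p q : R) (d0 d1 d2 l : nat)
  (Q1 : Rn R d0 -> Rn R d1) (Q2 : Rn R d0 -> Rn R d2)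
  (U : 'I_l -> set (Rn R d0)) (B : set (Rn R d0 * Rn R d1)) (C : R) :
  1 <= q -> q <= p ->
  measurable_fun setT Q1 -> measurable_fun setT Q2 ->
  (forall i, measurable (U i)) ->
  trivIset setT U ->
  \bigcup_(i in setT) U i = cube R d0 ->
  measurable B ->
  (forall g : Rn R d0 -> R[i], cmeasurable g -> cintegrable (cube R d0) g ->
     (LpnormC (pmeas (lebn R d0) (lebn R d1)) p B (E1 Q1 (cube R d0) g)
      <= C%:E * (\sum_(i < l)
           LpnormC (pmeas (lebn R d0) (lebn R d1)) p B (E1 Q1 (U i) g) `^ q)
          `^ q^-1)%E) ->
  forall (B' : set (Rn R d2)) (h : Rn R d0 -> R[i]),
    measurable B' -> cmeasurable h -> cintegrable (cube R d0) h ->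
    (LpnormC (pmeas (pmeas (lebn R d0) (lebn R d1)) (lebn R d2)) p (B `*` B')
       (E2 Q1 Q2 (cube R d0) h)
     <= C%:E * (\sum_(i < l)
          LpnormC (pmeas (pmeas (lebn R d0) (lebn R d1)) (lebn R d2)) p (B `*` B')
            (E2 Q1 Q2 (U i) h) `^ q) `^ q^-1)%E.
Proof.
move=> q1 qp mQ1 mQ2 mU _ _ mB hyp B' h mB' mh ih.
have p0 : 0 < p by apply: lt_le_trans qp; apply: lt_le_trans q1.
set m01 := pmeas (lebn R d0) (lebn R d1).
pose G V (x : (Rn R d0 * Rn R d1) * Rn R d2) : \bar R :=
  (`| (\1_(B `*` B') x * cmod (E2 Q1 Q2 V h x))%:E | `^ p)%E.
pose I V x2 := (\int[m01]_x01 G V (x01, x2))%E.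
have mG V : measurable V -> measurable_fun setT (G V).
  move=> mV; rewrite /G; apply: mpowR.
  have mc : measurable_fun setT (fun x => (\1_(B `*` B') x * cmod (E2 Q1 Q2 V h x))%R).
    apply: measurable_funM; first exact: measurable_indic (measurableX mB mB').
    exact: mE2.
  have mcE : measurable_fun setT (EFin \o (fun x => (\1_(B `*` B') x * cmod (E2 Q1 Q2 V h x))%R)).
    by apply/measurable_EFinP.
  exact: (measurableT_comp (@abse_measurable R setT) mcE).
have G0 V x : (0 <= G V x)%E by exact: poweR_ge0.
have LE V : measurable V -> LpnormC (pmeas m01 (lebn R d2)) p (B `*` B') (E2 Q1 Q2 V h)
    = ((\int[lebn R d2]_x2 I V x2) `^ p^-1)%E.
  move=> mV; rewrite /LpnormC unlock; congr (_ `^ _)%E.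
  exact: (fubini_tonelli2 (G V) (mG V mV) (G0 V)).
have mI V : measurable V -> measurable_fun setT (I V).
  by move=> mV; exact: (measurable_fun_fubini_tonelli_G (m1 := m01) (G V) (mG V mV) (G0 V)).
have I0 V x2 : (0 <= I V x2)%E by apply: integral_ge0 => x _; exact: G0.
pose g x2 u := h u * ee (dotn x2 (Q2 u)).
have E21 V x x2 : E2 Q1 Q2 V h (x, x2) = E1 Q1 V (g x2) x.
  rewrite /E2 /E1 /=; apply: f_equal; apply/funext => u /=.
  by rewrite ee_add /g -!mulrA [ee _ * _]mulrC.
have IB V x2 : B' x2 -> I V x2 =
    (\int[m01]_x `|(\1_B x * cmod (E1 Q1 V (g x2) x))%:E| `^ p)%E.
  move=> Bx2; apply: eq_integral => x _; rewrite /G indicX2.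
  rewrite [\1_B' x2]indicE (mem_set Bx2) mulr1 (E21 V x x2) //.
have INB V x2 : ~ B' x2 -> I V x2 = 0%E.
  move=> nB; have z : \1_B' x2 = 0 :> R by rewrite indicE memNset.
  rewrite /I /G; under eq_integral do rewrite indicX2 z mulr0 mul0r.
  under eq_integral do rewrite abse0 poweR0r ?gt_eqF //.
  by rewrite integral0.
have Ihyp x2 : (I (cube R d0) x2 `^ p^-1 <=
    C%:E * (\sum_(i < l) ((I (U i) x2 `^ p^-1) `^ q)%E)%R `^ q^-1)%E.
  have [Bx2|nB] := pselect (B' x2).
    have [cm ci] := cee (mcube R d0) mh ih (mdot (measurable_cst x2) mQ2).
    have := hyp (g x2) cm ci.
    rewrite /LpnormC unlock (IB (cube R d0) x2 Bx2).
    move=> H; under eq_bigr => i _ do rewrite (IB (U i) x2 Bx2).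
    exact: H.
  have q0 : 0 < q by apply: lt_le_trans q1.
  rewrite (INB (cube R d0) x2 nB) poweR0r ?invr_neq0 ?gt_eqF //.
  under eq_bigr => i _ do rewrite (INB (U i) x2 nB) poweR0r ?invr_neq0 ?gt_eqF // poweR0r ?gt_eqF //.
  rewrite big1 // poweR0r ?invr_neq0 ?gt_eqF // mule0 //.
rewrite (LE _ (mcube R d0)); under eq_bigr => i _ do rewrite (LE _ (mU i)).
apply: (AL (lebn R d2) (I0 := I (cube R d0)) (I := fun i => I (U i))) => //.
- exact: mI (mcube R d0).
- by move=> i; exact: mI.
Qed.
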